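(* For every expansive homeomorphism $f$ of a compact metrizable space $X$ there is a metric $\mathrm{d}$ on $X$ defining its topology such that $f$ is a bi-Lipschitz homeomorphism of $(X,\mathrm{d})$ and $f$ is $\mathrm{d}_W$-robustly expansive, i.e. there are $\epsilon,\delta>0$ such that every bi-Lipschitz homeomorphism $g$ of $(X,\mathrm{d})$ with $\mathrm{d}_W(f,g)<\epsilon$ is expansive with expansive constant $\delta$.
   Context: A homeomorphism $g$ of a compact metric space $(X,\mathrm{d})$ is expansive with expansive constant $\delta>0$ if $\mathrm{d}(g^n(x),g^n(y))\le\delta$ for all $n\in\mathbb Z$ implies $x=y$; $f$ is expansive if it is so for some metric defining the topology and some $\delta$. $\mathrm{d}_{C^0}(f,g)=\max_{x}\mathrm{d}(f(x),g(x))+\max_x\mathrm{d}(f^{-1}(x),g^{-1}(x))$; $\mathrm{d}'_W(f,g)=\sup_{x\ne y}\frac{|\mathrm{d}(f(x),f(y))-\mathrm{d}(g(x),g(y))|}{\mathrm{d}(x,y)}$; $\mathrm{d}_W(f,g)=\mathrm{d}_{C^0}(f,g)+\mathrm{d}'_W(f,g)+\mathrm{d}'_W(f^{-1},g^{-1})$ for bi-Lipschitz homeomorphisms $f,g$. *)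

(* Defs.v *)
From Stdlib Require Import Reals Lra ZArith List.
Open Scope R_scope.

Definition is_metric {X : Type} (d : X -> X -> R) : Prop :=
  (forall x y, 0 <= d x y) /\
  (forall x y, d x y = 0 <-> x = y) /\
  (forall x y, d x y = d y x) /\
  (forall x y z, d x z <= d x y + d y z).

Definition metric_open {X : Type} (d : X -> X -> R) (U : X -> Prop) : Prop :=
  forall x, U x -> exists r, 0 < r /\ forall y, d x y < r -> U y.

(** A topology on X is given by its family of open sets [T].
    [d] defines the topology [T]. *)
Definition metric_defines {X : Type} (T : (X -> Prop) -> Prop)
  (d : X -> X -> R) : Prop :=
  is_metric d /\ forall U, T U <-> metric_open d U.

Definition metrizable {X : Type} (T : (X -> Prop) -> Prop) : Prop :=
  exists d, metric_defines T d.

Definition compact_space {X : Type} (T : (X -> Prop) -> Prop) : Prop :=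
  forall (I : Type) (U : I -> X -> Prop),
    (forall i, T (U i)) -> (forall x, exists i, U i x) ->
    exists l : list I, forall x, exists i, In i l /\ U i x.

Definition continuous_map {X : Type} (T : (X -> Prop) -> Prop) (f : X -> X) : Prop :=
  forall U, T U -> T (fun x => U (f x)).

Definition homeomorphism {X : Type} (T : (X -> Prop) -> Prop) (f fi : X -> X) : Prop :=
  (forall x, fi (f x) = x) /\ (forall x, f (fi x) = x) /\
  continuous_map T f /\ continuous_map T fi.

Definition iterZ {X : Type} (f fi : X -> X) (n : Z) (x : X) : X :=
  match n with
  | Z0 => x
  | Zpos p => Nat.iter (Pos.to_nat p) f x
  | Zneg p => Nat.iter (Pos.to_nat p) fi x
  end.

Definition expansive_const {X : Type} (d : X -> X -> R) (g gi : X -> X) (delta : R) : Prop :=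
  0 < delta /\
  forall x y, (forall n : Z, d (iterZ g gi n x) (iterZ g gi n y) <= delta) -> x = y.

Definition expansive {X : Type} (T : (X -> Prop) -> Prop) (f fi : X -> X) : Prop :=
  exists d delta, metric_defines T d /\ expansive_const d f fi delta.

Definition lipschitz {X : Type} (d : X -> X -> R) (f : X -> X) : Prop :=
  exists L, forall x y, d (f x) (f y) <= L * d x y.

Definition bilipschitz_homeo {X : Type} (d : X -> X -> R) (f fi : X -> X) : Prop :=
  (forall x, fi (f x) = x) /\ (forall x, f (fi x) = x) /\
  lipschitz d f /\ lipschitz d fi.

(** Supremum of a set of nonnegative reals, with convention sup(empty) = 0 *)
Definition sup_nonneg (P : R -> Prop) (r : R) : Prop :=
  is_lub (fun v => v = 0 \/ P v) r.

Definition dC0 {X : Type} (d : X -> X -> R) (f fi g gi : X -> X) (r : R) : Prop :=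
  exists a b,
    sup_nonneg (fun v => exists x, v = d (f x) (g x)) a /\
    sup_nonneg (fun v => exists x, v = d (fi x) (gi x)) b /\
    r = a + b.

Definition dW' {X : Type} (d : X -> X -> R) (f g : X -> X) (r : R) : Prop :=
  sup_nonneg (fun v => exists x y, x <> y /\
     v = Rabs (d (f x) (f y) - d (g x) (g y)) / d x y) r.

Definition dW {X : Type} (d : X -> X -> R) (f fi g gi : X -> X) (r : R) : Prop :=
  exists c a b, dC0 d f fi g gi c /\ dW' d f g a /\ dW' d fi gi b /\ r = c + a + b.

(* Main.v *)
Require Import Defs.
From Stdlib Require Import Reals ZArith List Lra Lia Classical ClassicalEpsilon.
Open Scope R_scope.

Definition LUB (E : R -> Prop) : R := epsilon (inhabits 0%R) (fun m => is_lub E m).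

Lemma LUB_spec (E : R -> Prop) : bound E -> (exists x, E x) -> is_lub E (LUB E).
Proof.
  intros Hb Hn. unfold LUB. apply epsilon_spec.
  destruct (completeness E Hb Hn) as [m Hm]. exists m; exact Hm.
Qed.


Lemma iterZ_nat {X} (h hi : X -> X) (k : nat) x :
  iterZ h hi (Z.of_nat k) x = Nat.iter k h x.
Proof.
  destruct k; simpl; [reflexivity|]. rewrite SuccNat2Pos.id_succ. reflexivity.
Qed.

Lemma iterZ_negnat {X} (h hi : X -> X) (k : nat) x :
  iterZ h hi (- Z.of_nat k) x = Nat.iter k hi x.
Proof.
  destruct k; simpl; [reflexivity|]. rewrite SuccNat2Pos.id_succ. reflexivity.
Qed.

Lemma Z_cases (n : Z) : exists k : nat, n = Z.of_nat k \/ n = (- Z.of_nat k)%Z.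
Proof.
  exists (Z.abs_nat n). destruct (Z.le_gt_cases 0 n).
  - left. rewrite Nat2Z.inj_abs_nat. lia.
  - right. rewrite Nat2Z.inj_abs_nat. lia.
Qed.

Lemma iterZ_succ {X} (h hi : X -> X) (H1 : forall x, hi (h x) = x) (H2 : forall x, h (hi x) = x)
  n x : iterZ h hi (n + 1) x = h (iterZ h hi n x).
Proof.
  destruct (Z_cases n) as [k [-> | ->]].
  - replace (Z.of_nat k + 1)%Z with (Z.of_nat (S k)) by lia.
    rewrite !iterZ_nat. reflexivity.
  - destruct k.
    + simpl. reflexivity.
    + replace (- Z.of_nat (S k) + 1)%Z with (- Z.of_nat k)%Z by lia.
      rewrite !iterZ_negnat. simpl. rewrite H2. reflexivity.
Qed.

Lemma iterZ_pred {X} (h hi : X -> X) (H1 : forall x, hi (h x) = x) (H2 : forall x, h (hi x) = x)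
  n x : iterZ h hi (n - 1) x = hi (iterZ h hi n x).
Proof.
  replace n with ((n - 1) + 1)%Z at 2 by lia.
  rewrite iterZ_succ by assumption. rewrite H1. reflexivity.
Qed.

Lemma iterZ_add {X} (h hi : X -> X) (H1 : forall x, hi (h x) = x) (H2 : forall x, h (hi x) = x)
  i j x : iterZ h hi (i + j) x = iterZ h hi i (iterZ h hi j x).
Proof.
  induction i using Z.peano_ind.
  - reflexivity.
  - replace (Z.succ i + j)%Z with ((i + j) + 1)%Z by lia.
    unfold Z.succ. rewrite !iterZ_succ by assumption. rewrite IHi. reflexivity.
  - replace (Z.pred i + j)%Z with ((i + j) - 1)%Z by lia.
    unfold Z.pred. replace (i + -1)%Z with (i - 1)%Z by lia.
    rewrite !iterZ_pred by assumption. rewrite IHi. reflexivity.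
Qed.

Lemma iterZ_inj {X} (h hi : X -> X) (H1 : forall x, hi (h x) = x) (H2 : forall x, h (hi x) = x)
  n x y : iterZ h hi n x = iterZ h hi n y -> x = y.
Proof.
  intro E. assert (iterZ h hi (-n + n) x = iterZ h hi (-n + n) y) as E2.
  { rewrite !iterZ_add by assumption. rewrite E. reflexivity. }
  replace (-n + n)%Z with 0%Z in E2 by lia. exact E2.
Qed.

Lemma fold_min_pos {A} (g : A -> R) (l : list A) :
  (forall i, 0 < g i) -> 0 < fold_right (fun i a => Rmin a (g i)) 1 l.
Proof.
  intros H. induction l; simpl. lra. apply Rmin_glb_lt; auto.
Qed.

Lemma fold_min_le {A} (g : A -> R) (l : list A) i :
  In i l -> fold_right (fun i a => Rmin a (g i)) 1 l <= g i.
Proof.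
  induction l; simpl. tauto. intros [->|H].
  apply Rmin_r. eapply Rle_trans; [apply Rmin_l| auto].
Qed.

Lemma fold_max_ge {A} (g : A -> nat) (l : list A) i :
  In i l -> (g i <= fold_right (fun i a => max a (g i)) 0 l)%nat.
Proof.
  induction l; simpl. tauto. intros [->|H]. lia. specialize (IHl H). lia.
Qed.

Lemma ball_open {X} (d : X -> X -> R) (Hd : is_metric d) p r :
  metric_open d (fun z => d p z < r).
Proof.
  destruct Hd as (H0 & H1 & H2 & H3).
  intros z Hz. exists (r - d p z). split. lra.
  intros y Hy. specialize (H3 p z y). lra.
Qed.

Lemma open_and {X} (d : X -> X -> R) (B : X -> Prop) (P : Prop) :
  metric_open d B -> metric_open d (fun x => B x /\ P).
Proof.
  intros HB x [Bx Px]. destruct (HB x Bx) as [r [Hr Hy]].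
  exists r; split; auto.
Qed.

Lemma cont_metric {X} T (d : X -> X -> R) (Hd : metric_defines T d) h :
  continuous_map T h ->
  forall x eta, 0 < eta -> exists s, 0 < s /\ forall z, d x z < s -> d (h x) (h z) < eta.
Proof.
  intros Hc x eta He. destruct Hd as [Hm HT].
  assert (Hb : T (fun z => d (h x) z < eta)) by (apply HT; apply ball_open; auto).
  apply Hc in Hb. apply HT in Hb.
  destruct (Hb x) as [s [Hs Hz]].
  { destruct Hm as (_ & H1 & _). assert (d (h x) (h x) = 0) by (apply H1; auto). lra. }
  exists s; split; auto.
Qed.

Lemma cont_iter {X} (d : X -> X -> R) h
  (Hc : forall x eta, 0 < eta -> exists s, 0 < s /\ forall z, d x z < s -> d (h x) (h z) < eta) k :
  forall x eta, 0 < eta -> exists s, 0 < s /\ forall z, d x z < s -> d (Nat.iter k h x) (Nat.iter k h z) < eta.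
Proof.
  induction k; intros x eta He.
  - exists eta. split; auto.
  - simpl. destruct (Hc (Nat.iter k h x) eta He) as [s1 [Hs1 H1]].
    destruct (IHk x s1 Hs1) as [s2 [Hs2 H2]].
    exists s2; split; auto.
Qed.

Lemma cluster1 {X} T (d : X -> X -> R) (Hd : metric_defines T d) (Hc : compact_space T)
  (u : nat -> X) :
  exists p, forall eps, 0 < eps -> forall M, exists n, (M <= n)%nat /\ d (u n) p < eps.
Proof.
  destruct Hd as [Hm HT].
  apply NNPP. intro Hno.
  set (I := (X * posreal * nat)%type).
  set (U := fun (i : I) (x : X) => d (fst (fst i)) x < pos (snd (fst i)) /\
            (forall n, (snd i <= n)%nat -> ~ d (u n) (fst (fst i)) < pos (snd (fst i)))).
  destruct (Hc I U) as [l Hl].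
  - intros i. apply HT. apply open_and. apply ball_open; auto.
  - intros x. apply NNPP; intro Hx. apply Hno. exists x. intros eps He M.
    apply NNPP; intro H. apply Hx. exists (x, mkposreal eps He, M). unfold U; simpl. split.
    + destruct Hm as (_ & H1 & _). assert (d x x = 0) by (apply H1; auto). lra.
    + intros n Hn Hlt. apply H. exists n. split; auto.
  - set (Mx := fold_right (fun i a => max a (snd i)) 0%nat l).
    destruct (Hl (u Mx)) as [i [Hi [Hd1 Hd2]]].
    apply (Hd2 Mx). apply (fold_max_ge (fun i : I => snd i)). auto.
    destruct Hm as (_ & _ & Hs & _). rewrite Hs. auto.
Qed.

Lemma cluster2 {X} T (d : X -> X -> R) (Hd : metric_defines T d) (Hc : compact_space T)
  (u v : nat -> X) :
  exists p q, forall eps, 0 < eps -> forall M, exists n, (M <= n)%nat /\ d (u n) p < eps /\ d (v n) q < eps.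
Proof.
  destruct (cluster1 T d Hd Hc u) as [p Hp].
  exists p. destruct Hd as [Hm HT].
  apply NNPP. intro Hno.
  set (I := (X * posreal * nat)%type).
  set (U := fun (i : I) (x : X) => d (fst (fst i)) x < pos (snd (fst i)) /\
            (forall n, (snd i <= n)%nat -> ~ (d (u n) p < pos (snd (fst i)) /\ d (v n) (fst (fst i)) < pos (snd (fst i))))).
  destruct (Hc I U) as [l Hl].
  - intros i. apply HT. apply open_and. apply ball_open; auto.
  - intros x. apply NNPP; intro Hx. apply Hno. exists x. intros eps He M.
    apply NNPP; intro H. apply Hx. exists (x, mkposreal eps He, M). unfold U; simpl. split.
    + destruct Hm as (_ & H1 & _). assert (d x x = 0) by (apply H1; auto). lra.
    + intros n Hn Hlt. apply H. exists n. split; auto.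
  - set (Mx := fold_right (fun i a => max a (snd i)) 0%nat l).
    set (em := fold_right (fun (i : I) a => Rmin a (pos (snd (fst i)))) 1 l).
    assert (Hem : 0 < em) by (apply fold_min_pos; intros i; apply cond_pos).
    destruct (Hp em Hem Mx) as [n [Hn Hun]].
    destruct (Hl (v n)) as [i [Hi [Hd1 Hd2]]].
    apply (Hd2 n).
    + apply Nat.le_trans with Mx; auto. apply (fold_max_ge (fun i : I => snd i)). auto.
    + split.
      * eapply Rlt_le_trans; [exact Hun|]. apply (fold_min_le (fun i : I => pos (snd (fst i)))). auto.
      * destruct Hm as (_ & _ & Hs & _). rewrite Hs. auto.
Qed.

Definition Setup {X} (T : (X -> Prop) -> Prop) (d : X -> X -> R) (f fi : X -> X) (delta : R) : Prop :=
  metric_defines T d /\ compact_space T /\ homeomorphism T f fi /\ expansive_const d f fi delta.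

Lemma tri4 {X} (d : X -> X -> R) (Hd : is_metric d) a b c e :
  d a e <= d a b + d b c + d c e.
Proof.
  destruct Hd as (_ & _ & _ & H3). pose proof (H3 a b e). pose proof (H3 b c e). lra.
Qed.

Lemma contZ {X} T d (f fi : X -> X) delta (HS : Setup T d f fi delta) j :
  forall x eta, 0 < eta -> exists s, 0 < s /\ forall z, d x z < s ->
    d (iterZ f fi j x) (iterZ f fi j z) < eta.
Proof.
  destruct HS as (Hd & _ & (_ & _ & Hcf & Hcfi) & _).
  destruct (Z_cases j) as [k [-> | ->]]; intros x eta He.
  - destruct (cont_iter d f (cont_metric T d Hd f Hcf) k x eta He) as [s [Hs H]].
    exists s; split; auto. intros z Hz. rewrite !iterZ_nat. auto.
  - destruct (cont_iter d fi (cont_metric T d Hd fi Hcfi) k x eta He) as [s [Hs H]].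
    exists s; split; auto. intros z Hz. rewrite !iterZ_negnat. auto.
Qed.

Lemma cont_fin {X} T d (f fi : X -> X) delta (HS : Setup T d f fi delta) (m : nat) :
  forall x eta, 0 < eta -> exists s, 0 < s /\ forall y, d x y < s ->
    forall j, (Z.abs j <= Z.of_nat m)%Z -> d (iterZ f fi j x) (iterZ f fi j y) < eta.
Proof.
  induction m; intros x eta He.
  - exists eta. split; auto. intros y Hy j Hj. assert (j = 0%Z) by lia. subst. simpl. auto.
  - destruct (IHm x eta He) as [s1 [Hs1 H1]].
    destruct (contZ T d f fi delta HS (Z.of_nat (S m)) x eta He) as [s2 [Hs2 H2]].
    destruct (contZ T d f fi delta HS (- Z.of_nat (S m)) x eta He) as [s3 [Hs3 H3]].
    exists (Rmin s1 (Rmin s2 s3)). split.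
    { apply Rmin_glb_lt; auto. apply Rmin_glb_lt; auto. }
    intros y Hy j Hj.
    assert (Hy1 : d x y < s1) by (eapply Rlt_le_trans; [exact Hy| apply Rmin_l]).
    assert (Hy2 : d x y < s2) by (eapply Rlt_le_trans; [exact Hy| eapply Rle_trans; [apply Rmin_r| apply Rmin_l]]).
    assert (Hy3 : d x y < s3) by (eapply Rlt_le_trans; [exact Hy| eapply Rle_trans; [apply Rmin_r| apply Rmin_r]]).
    destruct (Z.le_gt_cases (Z.abs j) (Z.of_nat m)) as [Hle|Hgt].
    + apply H1; auto.
    + assert (j = Z.of_nat (S m) \/ j = (- Z.of_nat (S m))%Z) as [->| ->] by lia; auto.
Qed.

Lemma UE {X} T d (f fi : X -> X) delta (HS : Setup T d f fi delta) :
  forall gamma, 0 < gamma -> exists N : nat, forall u v,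
    (forall j, (Z.abs j <= Z.of_nat N)%Z -> d (iterZ f fi j u) (iterZ f fi j v) <= delta) ->
    d u v <= gamma.
Proof.
  intros gamma Hg. apply NNPP. intro Hno.
  assert (Hex : forall N : nat, exists uv : X * X,
    (forall j, (Z.abs j <= Z.of_nat N)%Z -> d (iterZ f fi j (fst uv)) (iterZ f fi j (snd uv)) <= delta)
    /\ gamma < d (fst uv) (snd uv)).
  { intros N. apply NNPP; intro H. apply Hno. exists N. intros u v Huv.
    apply Rnot_lt_le. intro Hlt. apply H. exists (u, v). simpl. auto. }
  set (w := fun N => proj1_sig (constructive_indefinite_description _ (Hex N))).
  assert (Hw : forall N, (forall j, (Z.abs j <= Z.of_nat N)%Z ->
      d (iterZ f fi j (fst (w N))) (iterZ f fi j (snd (w N))) <= delta) /\ gamma < d (fst (w N)) (snd (w N))).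
  { intros N. unfold w. destruct (constructive_indefinite_description _ (Hex N)) as [uv Huv]. exact Huv. }
  pose proof HS as S'. destruct S' as (Hd & Hc & _ & [Hdel Hexp]).
  pose proof (proj1 Hd) as Hm.
  destruct (cluster2 T d Hd Hc (fun n => fst (w n)) (fun n => snd (w n))) as [p [q Hpq]].
  assert (Hsym : forall a b, d a b = d b a) by (destruct Hm as (_ & _ & Hs & _); auto).
  assert (Hge : gamma <= d p q).
  { apply Rnot_lt_le. intro Hlt.
    destruct (Hpq ((gamma - d p q) / 2) ltac:(lra) 0%nat) as [n [_ [H1 H2]]].
    pose proof (tri4 d Hm (fst (w n)) p q (snd (w n))). rewrite (Hsym (snd (w n)) q) in H2.
    pose proof (proj2 (Hw n)). lra. }
  assert (Hpq' : p <> q).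
  { intro E. subst. destruct Hm as (_ & H1 & _). assert (d q q = 0) by (apply H1; auto). lra. }
  apply Hpq'. apply Hexp. intros j.
  apply Rnot_lt_le. intro Hlt.
  set (eta := (d (iterZ f fi j p) (iterZ f fi j q) - delta) / 2).
  assert (He : 0 < eta) by (unfold eta; lra).
  destruct (contZ T d f fi delta HS j p eta He) as [s1 [Hs1 H1]].
  destruct (contZ T d f fi delta HS j q eta He) as [s2 [Hs2 H2]].
  destruct (Hpq (Rmin s1 s2) ltac:(apply Rmin_glb_lt; auto) (Z.abs_nat j)) as [n [Hn [Hu Hv]]].
  assert (A1 : d (iterZ f fi j p) (iterZ f fi j (fst (w n))) < eta).
  { apply H1. rewrite Hsym. eapply Rlt_le_trans; [exact Hu| apply Rmin_l]. }
  assert (A2 : d (iterZ f fi j q) (iterZ f fi j (snd (w n))) < eta).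
  { apply H2. rewrite Hsym. eapply Rlt_le_trans; [exact Hv| apply Rmin_r]. }
  assert (A3 : d (iterZ f fi j (fst (w n))) (iterZ f fi j (snd (w n))) <= delta).
  { apply (proj1 (Hw n)). rewrite <- Nat2Z.inj_abs_nat. lia. }
  pose proof (tri4 d Hm (iterZ f fi j p) (iterZ f fi j (fst (w n))) (iterZ f fi j (snd (w n))) (iterZ f fi j q)).
  rewrite (Hsym (iterZ f fi j (snd (w n)))) in H. unfold eta in *. lra.
Qed.

Lemma least_nat (P : nat -> Prop) n : P n -> exists m, P m /\ forall i, (i < m)%nat -> ~ P i.
Proof.
  revert P. induction n as [n IH] using lt_wf_ind. intros P Hn.
  destruct (classic (exists i, (i < n)%nat /\ P i)) as [[i [Hi Pi]]|Hno].
  - exact (IH i Hi P Pi).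
  - exists n. split; auto. intros i Hi Pi. apply Hno. eauto.
Qed.

Lemma half_pow_bounds k : 0 < (1/2)^k <= 1.
Proof.
  induction k; simpl; lra.
Qed.

Lemma half_pow_anti i j : (i <= j)%nat -> (1/2)^j <= (1/2)^i.
Proof.
  induction 1. lra. simpl. pose proof (half_pow_bounds m). lra.
Qed.

Lemma half_pow_add i j : (1/2)^(i + j) = (1/2)^i * (1/2)^j.
Proof. apply pow_add. Qed.

Definition Eclose {X} (d : X -> X -> R) (f fi : X -> X) (e : R) (m : Z) (x y : X) : Prop :=
  forall j : Z, (Z.abs j <= m)%Z -> d (iterZ f fi j x) (iterZ f fi j y) <= e.

Definition Gk {X} (d : X -> X -> R) (f fi : X -> X) (e : R) (N : nat) (k : nat) (x y : X) : Prop :=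
  Eclose d f fi e (Z.of_nat k * Z.of_nat N)%Z x y.

Definition rhoset {X} (d : X -> X -> R) (f fi : X -> X) (e : R) (N : nat) (x y : X) (v : R) : Prop :=
  v = 0 \/ exists k, ~ Gk d f fi e N k x y /\ v = (1/2)^k.

Definition rho {X} (d : X -> X -> R) (f fi : X -> X) (e : R) (N : nat) (x y : X) : R :=
  LUB (rhoset d f fi e N x y).

Definition RhoHyp {X} (T : (X -> Prop) -> Prop) d (f fi : X -> X) delta e (N : nat) : Prop :=
  Setup T d f fi delta /\ e = delta / 3 /\ (1 <= N)%nat /\
  (forall u v, (forall j, (Z.abs j <= Z.of_nat N)%Z -> d (iterZ f fi j u) (iterZ f fi j v) <= delta) -> d u v <= e).


Lemma rho_lub {X} (d : X -> X -> R) f fi e N x y : is_lub (rhoset d f fi e N x y) (rho d f fi e N x y).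
Proof.
  apply LUB_spec.
  - exists 1. intros v [->|[k [_ ->]]]. lra. apply half_pow_bounds.
  - exists 0. left; auto.
Qed.

Lemma rho_ge {X} (d : X -> X -> R) f fi e N x y k :
  ~ Gk d f fi e N k x y -> (1/2)^k <= rho d f fi e N x y.
Proof. intros H. apply (proj1 (rho_lub d f fi e N x y)). right. eauto. Qed.

Lemma rho_le {X} (d : X -> X -> R) f fi e N x y r : 0 <= r ->
  (forall k, ~ Gk d f fi e N k x y -> (1/2)^k <= r) -> rho d f fi e N x y <= r.
Proof.
  intros H0 H. apply (proj2 (rho_lub d f fi e N x y)). intros v [->|[k [Hk ->]]]; auto.
Qed.

Lemma rho_nonneg {X} (d : X -> X -> R) f fi e N x y : 0 <= rho d f fi e N x y.
Proof. apply (proj1 (rho_lub d f fi e N x y)). left; auto. Qed.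

Lemma rho_le1 {X} (d : X -> X -> R) f fi e N x y : rho d f fi e N x y <= 1.
Proof. apply rho_le. lra. intros k _. apply half_pow_bounds. Qed.

Lemma Eclose_mono {X} (d : X -> X -> R) f fi e m m' x y :
  (m <= m')%Z -> Eclose d f fi e m' x y -> Eclose d f fi e m x y.
Proof. intros Hm H j Hj. apply H. lia. Qed.

Lemma Gk_mono {X} (d : X -> X -> R) f fi e N k k' x y :
  (k <= k')%nat -> Gk d f fi e N k' x y -> Gk d f fi e N k x y.
Proof. intros Hk. apply Eclose_mono. apply Z.mul_le_mono_nonneg_r; lia. Qed.

Lemma rho_xx {X} T (d : X -> X -> R) f fi delta e N (H : RhoHyp T d f fi delta e N) x :
  rho d f fi e N x x = 0.
Proof.
  apply Rle_antisym; [|apply rho_nonneg]. apply rho_le. lra.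
  intros k Hk. exfalso. apply Hk. intros j _.
  destruct H as ((((_ & H1 & _) & _) & _ & _ & Hdel & _) & He & _).
  destruct (H1 (iterZ f fi j x) (iterZ f fi j x)) as [_ ->]; auto. lra.
Qed.

Lemma RH_parts {X} T (d : X -> X -> R) f fi delta e N (H : RhoHyp T d f fi delta e N) :
  is_metric d /\ (forall x, fi (f x) = x) /\ (forall x, f (fi x) = x) /\ 0 < delta /\ e = delta / 3 /\
  (1 <= N)%nat /\
  (forall u v, (forall j, (Z.abs j <= Z.of_nat N)%Z -> d (iterZ f fi j u) (iterZ f fi j v) <= delta) -> d u v <= e) /\
  (forall x y, (forall n : Z, d (iterZ f fi n x) (iterZ f fi n y) <= delta) -> x = y).
Proof.
  destruct H as (((Hm & _) & _ & (H1 & H2 & _) & Hdel & Hexp) & He & HN & HB).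
  exact (conj Hm (conj H1 (conj H2 (conj Hdel (conj He (conj HN (conj HB Hexp))))))).
Qed.

Lemma rho_sym {X} T (d : X -> X -> R) f fi delta e N (H : RhoHyp T d f fi delta e N) x y :
  rho d f fi e N x y = rho d f fi e N y x.
Proof.
  destruct (RH_parts T d f fi delta e N H) as ((_ & _ & Hs & _) & _).
  assert (forall a b, rho d f fi e N a b <= rho d f fi e N b a).
  { intros a b. apply rho_le. apply rho_nonneg. intros k Hk. apply rho_ge.
    intro G. apply Hk. intros j Hj. rewrite Hs. apply G; auto. }
  apply Rle_antisym; auto.
Qed.

Lemma rho_pos {X} T (d : X -> X -> R) f fi delta e N (H : RhoHyp T d f fi delta e N) x y :
  x <> y -> 0 < rho d f fi e N x y.
Proof.
  intros Hxy. destruct (RH_parts T d f fi delta e N H) as (_ & _ & _ & Hdel & He & HN & _ & Hexp).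
  assert (exists j, delta < d (iterZ f fi j x) (iterZ f fi j y)) as [j Hj].
  { apply NNPP. intro Hn. apply Hxy. apply Hexp. intros n. apply Rnot_lt_le. intro Hl. apply Hn. eauto. }
  assert (~ Gk d f fi e N (Z.abs_nat j) x y).
  { intro G. specialize (G j). assert (d (iterZ f fi j x) (iterZ f fi j y) <= e).
    { apply G. rewrite Nat2Z.inj_abs_nat. nia. }
    lra. }
  eapply Rlt_le_trans; [apply half_pow_bounds| apply rho_ge; eauto].
Qed.

Lemma G_three {X} T (d : X -> X -> R) f fi delta e N (H : RhoHyp T d f fi delta e N) k x y z w :
  Gk d f fi e N (S k) x y -> Gk d f fi e N (S k) y z -> Gk d f fi e N (S k) z w -> Gk d f fi e N k x w.
Proof.
  destruct (RH_parts T d f fi delta e N H) as (Hm & H1 & H2 & Hdel & He & HN & HB & _).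
  unfold Gk, Eclose. rewrite Nat2Z.inj_succ.
  intros Gxy Gyz Gzw j Hj. apply HB. intros i Hi.
  rewrite <- !iterZ_add by assumption.
  assert (Hij : (Z.abs (i + j) <= Z.succ (Z.of_nat k) * Z.of_nat N)%Z) by lia.
  pose proof (tri4 d Hm (iterZ f fi (i + j) x) (iterZ f fi (i + j) y) (iterZ f fi (i + j) z) (iterZ f fi (i + j) w)).
  specialize (Gxy _ Hij). specialize (Gyz _ Hij). specialize (Gzw _ Hij). lra.
Qed.

Lemma rho_three {X} T (d : X -> X -> R) f fi delta e N (H : RhoHyp T d f fi delta e N) x y z w :
  rho d f fi e N x w <= 2 * Rmax (rho d f fi e N x y) (Rmax (rho d f fi e N y z) (rho d f fi e N z w)).
Proof.
  set (r := Rmax (rho d f fi e N x y) (Rmax (rho d f fi e N y z) (rho d f fi e N z w))).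
  assert (Hr1 : rho d f fi e N x y <= r) by apply Rmax_l.
  assert (Hr2 : rho d f fi e N y z <= r) by (eapply Rle_trans; [apply Rmax_l| apply Rmax_r]).
  assert (Hr3 : rho d f fi e N z w <= r) by (eapply Rle_trans; [apply Rmax_r| apply Rmax_r]).
  pose proof (rho_nonneg d f fi e N x y).
  apply rho_le. lra. intros k Hk. apply Rnot_lt_le. intro Hlt.
  assert (Hs : r < (1/2)^(S k)) by (simpl; lra).
  apply Hk. eapply (G_three T d f fi delta e N H k x y z w);
  apply NNPP; intro Hn; apply rho_ge in Hn; lra.
Qed.

Lemma rho_lip {X} T (d : X -> X -> R) f fi delta e N (H : RhoHyp T d f fi delta e N) (s : Z) x y :
  (s = 1 \/ s = -1)%Z ->
  rho d f fi e N (iterZ f fi s x) (iterZ f fi s y) <= 2 * rho d f fi e N x y.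
Proof.
  intros Hs.
  destruct (RH_parts T d f fi delta e N H) as (Hm & H1 & H2 & Hdel & He & HN & HB & _).
  apply rho_le. pose proof (rho_nonneg d f fi e N x y). lra.
  intros k Hk.
  assert (~ Gk d f fi e N (S k) x y).
  { intros G. apply Hk. intros j Hj. rewrite <- !iterZ_add by assumption. apply G.
    rewrite Nat2Z.inj_succ. lia. }
  apply rho_ge in H0. simpl in H0. lra.
Qed.

Lemma G_small {X} (d : X -> X -> R) f fi e N x y k :
  rho d f fi e N x y < (1/2)^k -> Gk d f fi e N k x y.
Proof.
  intros Hl. apply NNPP. intro Hn. apply rho_ge in Hn. lra.
Qed.

Lemma rho_small {X} (d : X -> X -> R) f fi e N x y k :
  Gk d f fi e N k x y -> rho d f fi e N x y <= (1/2)^(S k).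
Proof.
  intros G. apply rho_le. pose proof (half_pow_bounds (S k)); lra.
  intros i Hi. apply half_pow_anti. destruct (Nat.le_gt_cases i k); [|lia].
  exfalso. apply Hi. eapply Gk_mono; eauto.
Qed.

Lemma rho_hyp {X} T (d : X -> X -> R) f fi delta e N (H : RhoHyp T d f fi delta e N) x y :
  rho d f fi e N x y < (1/2)^3 ->
  8 * rho d f fi e N x y <= rho d f fi e N (iterZ f fi (3 * Z.of_nat N) x) (iterZ f fi (3 * Z.of_nat N) y) \/
  8 * rho d f fi e N x y <= rho d f fi e N (iterZ f fi (- (3 * Z.of_nat N)) x) (iterZ f fi (- (3 * Z.of_nat N)) y).
Proof.
  intros Hsmall.
  destruct (RH_parts T d f fi delta e N H) as (Hm & H1 & H2 & Hdel & He & HN & HB & Hexp).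
  destruct (classic (x = y)) as [<-|Hxy].
  { rewrite (rho_xx T d f fi delta e N H). left. rewrite Rmult_0_r. apply rho_nonneg. }
  assert (exists k, ~ Gk d f fi e N k x y) as [k0 Hk0].
  { apply NNPP; intro Hn. pose proof (rho_pos T d f fi delta e N H x y Hxy).
    assert (rho d f fi e N x y <= 0); [|lra].
    apply rho_le. lra. intros k Hk. exfalso. apply Hn. eauto. }
  destruct (least_nat (fun k => ~ Gk d f fi e N k x y) k0 Hk0) as [m [Hm1 Hm2]].
  assert (Hge : (1/2)^m <= rho d f fi e N x y) by (apply rho_ge; auto).
  assert (Hle : rho d f fi e N x y <= (1/2)^m).
  { apply rho_le. pose proof (half_pow_bounds m); lra. intros i Hi. apply half_pow_anti.
    destruct (Nat.le_gt_cases m i); auto. exfalso. apply (Hm2 i); auto. }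
  assert (Hm4 : (4 <= m)%nat).
  { destruct (Nat.le_gt_cases 4 m); auto. assert ((1/2)^3 <= (1/2)^m) by (apply half_pow_anti; lia). lra. }
  assert (Gm1 : Gk d f fi e N (m - 1) x y) by (apply NNPP; intro Hn; apply (Hm2 (m-1)%nat); auto; lia).
  assert (exists j, (Z.abs j <= Z.of_nat m * Z.of_nat N)%Z /\ e < d (iterZ f fi j x) (iterZ f fi j y)) as [j [Hj1 Hj2]].
  { apply NNPP; intro Hn. apply Hm1. intros j Hj. apply Rnot_lt_le. intro Hl. apply Hn. eauto. }
  assert (Hj3 : (Z.of_nat (m - 1) * Z.of_nat N < Z.abs j)%Z).
  { destruct (Z.le_gt_cases (Z.abs j) (Z.of_nat (m - 1) * Z.of_nat N)); auto.
    specialize (Gm1 j H0). lra. }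
  rewrite Nat2Z.inj_sub in Hj3 by lia.
  assert (Hpow : 8 * (1/2)^m = (1/2)^(m - 3)).
  { replace m with ((m - 3) + 3)%nat at 1 by lia. rewrite half_pow_add. simpl. lra. }
  assert (Hgm3 : forall s : Z, (Z.abs (j - s) <= Z.of_nat (m - 3) * Z.of_nat N)%Z ->
     (1/2)^(m-3) <= rho d f fi e N (iterZ f fi s x) (iterZ f fi s y)).
  { intros s Hs. apply rho_ge. intro G. specialize (G (j - s)%Z Hs).
    rewrite <- !iterZ_add in G by assumption. replace (j - s + s)%Z with j in G by lia. lra. }
  rewrite Nat2Z.inj_sub in Hgm3 by lia.
  destruct (Z.le_gt_cases 0 j).
  - left. apply Rle_trans with (8 * (1/2)^m); [lra|]. rewrite Hpow. apply Hgm3. simpl Z.of_nat. nia.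
  - right. apply Rle_trans with (8 * (1/2)^m); [lra|]. rewrite Hpow. apply Hgm3. simpl Z.of_nat. nia.
Qed.

Fixpoint ps {X} (r : X -> X -> R) (x : X) (Q : list X) : R :=
  match Q with
  | nil => 0
  | z :: Q' => r x z + ps r z Q'
  end.

Fixpoint lst {X} (x : X) (Q : list X) : X :=
  match Q with
  | nil => x
  | z :: Q' => lst z Q'
  end.

Definition RhoOK {X} (r : X -> X -> R) : Prop :=
  (forall x y, 0 <= r x y) /\ (forall x, r x x = 0) /\ (forall x y, r x y = r y x) /\
  (forall x y z w, r x w <= 2 * Rmax (r x y) (Rmax (r y z) (r z w))).

Lemma ps_nonneg {X} (r : X -> X -> R) (Hr : forall x y, 0 <= r x y) x Q : 0 <= ps r x Q.
Proof. revert x; induction Q; intros x; simpl. lra. specialize (Hr x a). specialize (IHQ a). lra. Qed.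

Lemma ps_app {X} (r : X -> X -> R) x Q1 Q2 : ps r x (Q1 ++ Q2) = ps r x Q1 + ps r (lst x Q1) Q2.
Proof. revert x; induction Q1; intros x; simpl. lra. rewrite IHQ1. lra. Qed.

Lemma lst_app {X} (x : X) Q1 Q2 : lst x (Q1 ++ Q2) = lst (lst x Q1) Q2.
Proof. revert x; induction Q1; intros x; simpl; auto. Qed.

Lemma ps_split {X} (r : X -> X -> R) (Hr : forall x y, 0 <= r x y) Q :
  forall x t, Q <> nil -> 0 <= t -> t <= ps r x Q ->
  exists Q1 z Q2, Q = Q1 ++ z :: Q2 /\ ps r x Q1 <= t /\ ps r z Q2 <= ps r x Q - t.
Proof.
  induction Q as [|a Q IH]; intros x t Hne Ht Htle. congruence.
  simpl in Htle.
  destruct (Rlt_le_dec t (r x a)) as [Hlt|Hle].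
  - exists nil, a, Q. simpl. repeat split; auto; lra.
  - destruct Q as [|b Q'].
    + exists nil, a, nil. simpl in *. repeat split; lra.
    + destruct (IH a (t - r x a) ltac:(congruence) ltac:(lra) ltac:(lra)) as [Q1 [z [Q2 [E [H1 H2]]]]].
      exists (a :: Q1), z, Q2. simpl. rewrite E. repeat split; auto; simpl in *; lra.
Qed.

Lemma frink {X} (r : X -> X -> R) (Hr : RhoOK r) Q : forall x, r x (lst x Q) <= 2 * ps r x Q.
Proof.
  destruct Hr as (H0 & Hxx & Hs & H3).
  induction Q as [Q IH] using (well_founded_induction (Wf_nat.well_founded_ltof _ (@length X))).
  intros x. destruct Q as [|a Q'].
  - simpl. rewrite Hxx. lra.
  - set (S := ps r x (a :: Q')).
    assert (HS : 0 <= S) by (apply ps_nonneg; auto).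
    assert (HS2 : S / 2 <= ps r x (a :: Q')) by (unfold S in *; lra).
    assert (HS3 : 0 <= S / 2) by lra.
    destruct (ps_split r H0 (a :: Q') x (S / 2) ltac:(congruence) HS3 HS2)
      as [Q1 [z [Q2 [E [Hs1 Hs2]]]]].
    fold S in Hs2.
    assert (HL1 : (length Q1 < length (a :: Q'))%nat) by (rewrite E, length_app; simpl; lia).
    assert (HL2 : (length Q2 < length (a :: Q'))%nat) by (rewrite E, length_app; simpl; lia).
    pose proof (IH Q1 HL1 x) as I1. pose proof (IH Q2 HL2 z) as I2.
    assert (Hsum : S = ps r x Q1 + r (lst x Q1) z + ps r z Q2).
    { unfold S. rewrite E, ps_app. simpl. lra. }
    assert (Hl : lst x (a :: Q') = lst z Q2) by (rewrite E, lst_app; reflexivity).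
    rewrite Hl.
    pose proof (H3 x (lst x Q1) z (lst z Q2)).
    pose proof (ps_nonneg r H0 x Q1). pose proof (ps_nonneg r H0 z Q2).
    assert (Rmax (r x (lst x Q1)) (Rmax (r (lst x Q1) z) (r z (lst z Q2))) <= S).
    { apply Rmax_lub. lra. apply Rmax_lub; lra. }
    lra.
Qed.

Definition Dset {X} (r : X -> X -> R) (x y : X) (v : R) : Prop :=
  exists Q, lst x Q = y /\ v = - ps r x Q.

Definition Dch {X} (r : X -> X -> R) (x y : X) : R := - LUB (Dset r x y).

Lemma Dset_lub {X} (r : X -> X -> R) (H0 : forall x y, 0 <= r x y) x y : is_lub (Dset r x y) (LUB (Dset r x y)).
Proof.
  apply LUB_spec.
  - exists 0. intros v [Q [_ ->]]. pose proof (ps_nonneg r H0 x Q). lra.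
  - exists (- ps r x (y :: nil)). exists (y :: nil). simpl. auto.
Qed.

Lemma D_le {X} (r : X -> X -> R) (H0 : forall x y, 0 <= r x y) x y Q :
  lst x Q = y -> Dch r x y <= ps r x Q.
Proof.
  intros HQ. unfold Dch. assert (- ps r x Q <= LUB (Dset r x y)); [|lra].
  apply (proj1 (Dset_lub r H0 x y)). exists Q; auto.
Qed.

Lemma D_ge {X} (r : X -> X -> R) (H0 : forall x y, 0 <= r x y) x y b :
  (forall Q, lst x Q = y -> b <= ps r x Q) -> b <= Dch r x y.
Proof.
  intros H. unfold Dch. assert (LUB (Dset r x y) <= - b); [|lra].
  apply (proj2 (Dset_lub r H0 x y)). intros v [Q [HQ ->]]. specialize (H Q HQ). lra.
Qed.

Lemma D_nonneg {X} (r : X -> X -> R) (H0 : forall x y, 0 <= r x y) x y : 0 <= Dch r x y.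
Proof. apply D_ge; auto. intros Q _. apply ps_nonneg; auto. Qed.

Lemma D_xx {X} (r : X -> X -> R) (H0 : forall x y, 0 <= r x y) x : Dch r x x = 0.
Proof.
  apply Rle_antisym. apply (D_le r H0 x x nil). reflexivity. apply D_nonneg; auto.
Qed.

Lemma D_le_rho {X} (r : X -> X -> R) (H0 : forall x y, 0 <= r x y) x y : Dch r x y <= r x y.
Proof.
  eapply Rle_trans. apply (D_le r H0 x y (y :: nil)). reflexivity. simpl. lra.
Qed.

Lemma rho_le_2D {X} (r : X -> X -> R) (Hr : RhoOK r) x y : r x y <= 2 * Dch r x y.
Proof.
  assert (H0 := proj1 Hr).
  assert (r x y / 2 <= Dch r x y); [|lra].
  apply D_ge; auto. intros Q HQ. pose proof (frink r Hr Q x). rewrite HQ in H. lra.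
Qed.

Fixpoint rp {X} (x : X) (Q : list X) : list X :=
  match Q with
  | nil => nil
  | z :: Q' => rp z Q' ++ x :: nil
  end.

Lemma rp_spec {X} (r : X -> X -> R) (Hs : forall x y, r x y = r y x) Q : forall x,
  lst (lst x Q) (rp x Q) = x /\ ps r (lst x Q) (rp x Q) = ps r x Q.
Proof.
  induction Q as [|z Q IH]; intros x; simpl. auto.
  destruct (IH z) as [E1 E2]. rewrite lst_app, ps_app, E1, E2. simpl. split; auto. rewrite Hs. lra.
Qed.

Lemma D_sym {X} (r : X -> X -> R) (Hr : RhoOK r) x y : Dch r x y = Dch r y x.
Proof.
  destruct Hr as (H0 & _ & Hs & _).
  assert (forall a b, Dch r b a <= Dch r a b).
  { intros a b. apply D_ge; auto. intros Q HQ. subst b. destruct (rp_spec r Hs Q a) as [E1 E2].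
    rewrite <- E2. apply D_le; auto. }
  apply Rle_antisym; auto.
Qed.

Lemma D_tri {X} (r : X -> X -> R) (H0 : forall x y, 0 <= r x y) x y z : Dch r x z <= Dch r x y + Dch r y z.
Proof.
  assert (forall Q1 Q2, lst x Q1 = y -> lst y Q2 = z -> Dch r x z <= ps r x Q1 + ps r y Q2).
  { intros Q1 Q2 E1 E2. rewrite <- E1. rewrite <- ps_app. apply D_le; auto. rewrite lst_app, E1; auto. }
  assert (forall Q2, lst y Q2 = z -> Dch r x z - ps r y Q2 <= Dch r x y).
  { intros Q2 E2. apply D_ge; auto. intros Q1 E1. specialize (H Q1 Q2 E1 E2). lra. }
  assert (Dch r x z - Dch r x y <= Dch r y z); [|lra].
  apply D_ge; auto. intros Q2 E2. specialize (H1 Q2 E2). lra.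
Qed.

Lemma D_map {X} (r : X -> X -> R) (H0 : forall x y, 0 <= r x y) (h : X -> X) L
  (HL : forall a b, r (h a) (h b) <= L * r a b) (HL0 : 0 <= L) x y :
  Dch r (h x) (h y) <= L * Dch r x y.
Proof.
  destruct (Req_dec L 0) as [->|HLn].
  - rewrite Rmult_0_l. apply Rle_trans with (r (h x) (h y)). apply D_le_rho; auto.
    specialize (HL x y). lra.
  - assert (Dch r (h x) (h y) / L <= Dch r x y).
    { apply D_ge; auto. intros Q HQ.
      assert (Hm : forall x0, lst (h x0) (map h Q) = h (lst x0 Q) /\ ps r (h x0) (map h Q) <= L * ps r x0 Q).
      { clear HQ. induction Q as [|a Q IH]; intros x0; simpl. split; auto. lra.
        destruct (IH a) as [I1 I2]. split; auto. specialize (HL x0 a). lra. }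
      destruct (Hm x) as [E1 E2]. rewrite HQ in E1.
      pose proof (D_le r H0 (h x) (h y) (map h Q) E1).
      apply Rmult_le_reg_l with L. lra. field_simplify; [|lra]. lra. }
    apply Rmult_le_reg_l with (/ L). apply Rinv_0_lt_compat; lra.
    rewrite <- Rmult_assoc, Rinv_l, Rmult_1_l by lra. rewrite Rmult_comm. exact H.
Qed.

Fixpoint MXg (w : nat -> R) (n : nat) : R :=
  match n with
  | O => w O
  | S n' => Rmax (MXg w n') (w (S n'))
  end.

Lemma MXg_ge (w : nat -> R) n i : (i <= n)%nat -> w i <= MXg w n.
Proof.
  induction n; intros Hi. assert (i = 0%nat) by lia; subst; simpl; lra.
  simpl. destruct (Nat.eq_dec i (S n)) as [->|Hne]. apply Rmax_r.
  eapply Rle_trans; [apply IHn; lia| apply Rmax_l].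
Qed.

Lemma MXg_le (w : nat -> R) n b : (forall i, (i <= n)%nat -> w i <= b) -> MXg w n <= b.
Proof.
  induction n; intros H; simpl. apply H; lia. apply Rmax_lub. apply IHn. intros i Hi; apply H; lia. apply H; lia.
Qed.

Lemma MXg_att (w : nat -> R) n : exists i, (i <= n)%nat /\ MXg w n = w i.
Proof.
  induction n; simpl. exists 0%nat; auto.
  destruct IHn as [i [Hi E]]. destruct (Rle_dec (MXg w n) (w (S n))).
  - exists (S n). split; auto. rewrite Rmax_right; auto.
  - exists i. split; auto. rewrite Rmax_left; auto; lra.
Qed.

Definition Wf {X} (D : X -> X -> R) (f fi : X -> X) (k : R) (x y : X) (i : nat) : R :=
  Rmax (D (iterZ f fi (Z.of_nat i) x) (iterZ f fi (Z.of_nat i) y))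
       (D (iterZ f fi (- Z.of_nat i) x) (iterZ f fi (- Z.of_nat i) y)) / k ^ i.

Definition D2 {X} (D : X -> X -> R) (f fi : X -> X) (k : R) (M : nat) (x y : X) : R :=
  MXg (Wf D f fi k x y) M.

Definition LyapHyp {X} (D : X -> X -> R) (f fi : X -> X) (k : R) (M : nat) (c0 : R) : Prop :=
  is_metric D /\ (forall x, fi (f x) = x) /\ (forall x, f (fi x) = x) /\
  (forall s x y, (s = 1 \/ s = -1)%Z -> D (iterZ f fi s x) (iterZ f fi s y) <= 2 * D x y) /\
  (1 <= M)%nat /\ 1 < k /\ k ^ M = 4 /\
  (forall x y, D x y < c0 ->
     4 * D x y <= D (iterZ f fi (Z.of_nat M) x) (iterZ f fi (Z.of_nat M) y) \/
     4 * D x y <= D (iterZ f fi (- Z.of_nat M) x) (iterZ f fi (- Z.of_nat M) y)).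

Lemma kpow_ge1 k i : 1 <= k -> 1 <= k ^ i.
Proof. intros H. induction i; simpl. lra. nra. Qed.

Lemma D_iterZ {X} (D : X -> X -> R) f fi k M c0 (H : LyapHyp D f fi k M c0) i x y :
  D (iterZ f fi (Z.of_nat i) x) (iterZ f fi (Z.of_nat i) y) <= 2 ^ i * D x y /\
  D (iterZ f fi (- Z.of_nat i) x) (iterZ f fi (- Z.of_nat i) y) <= 2 ^ i * D x y.
Proof.
  destruct H as (Hm & H1 & H2 & HL & _).
  induction i. simpl. split; lra.
  destruct IHi as [I1 I2].
  replace (Z.of_nat (S i)) with (1 + Z.of_nat i)%Z by lia.
  replace (- (1 + Z.of_nat i))%Z with (-1 + - Z.of_nat i)%Z by lia.
  rewrite !iterZ_add by assumption.
  assert (E2 : 2 ^ S i = 2 * 2 ^ i) by reflexivity. rewrite E2. split.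
  - eapply Rle_trans. apply HL; auto. lra.
  - eapply Rle_trans. apply HL; auto. lra.
Qed.

Lemma W0 {X} (D : X -> X -> R) f fi k x y : Wf D f fi k x y 0 = D x y.
Proof. unfold Wf. simpl. rewrite Rmax_left by lra. field. Qed.

Lemma D2_ge_D {X} (D : X -> X -> R) f fi k M x y : D x y <= D2 D f fi k M x y.
Proof. rewrite <- (W0 D f fi k x y). apply MXg_ge. lia. Qed.

Lemma D2_le_D {X} (D : X -> X -> R) f fi k M c0 (H : LyapHyp D f fi k M c0) x y :
  D2 D f fi k M x y <= 2 ^ M * D x y.
Proof.
  pose proof H as H'. destruct H' as ((H0 & _) & _ & _ & _ & _ & Hk & _).
  apply MXg_le. intros i Hi. unfold Wf.
  destruct (D_iterZ D f fi k M c0 H i x y) as [I1 I2].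
  pose proof (kpow_ge1 k i ltac:(lra)).
  assert (2 ^ i <= 2 ^ M) by (apply Rle_pow; lra || lia).
  pose proof (H0 x y).
  apply Rle_trans with (Rmax (D (iterZ f fi (Z.of_nat i) x) (iterZ f fi (Z.of_nat i) y))
       (D (iterZ f fi (- Z.of_nat i) x) (iterZ f fi (- Z.of_nat i) y))).
  - unfold Rdiv. rewrite <- (Rmult_1_r (Rmax _ _)) at 2. apply Rmult_le_compat_l.
    eapply Rle_trans; [apply H0| apply Rmax_l]. rewrite <- Rinv_1. apply Rinv_le_contravar; lra.
  - apply Rmax_lub; nra.
Qed.

Lemma D2_metric {X} (D : X -> X -> R) f fi k M c0 (H : LyapHyp D f fi k M c0) : is_metric (D2 D f fi k M).
Proof.
  pose proof H as H'. destruct H' as ((H0 & H1 & Hs & H3) & _ & _ & _ & _ & Hk & _).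
  assert (Hkp : forall i, 0 < k ^ i) by (intros; apply pow_lt; lra).
  split; [|split; [|split]].
  - intros x y. eapply Rle_trans; [apply H0| apply D2_ge_D].
  - intros x y. split.
    + intros E. apply H1. apply Rle_antisym; [|apply H0]. rewrite <- E. apply D2_ge_D.
    + intros ->. apply Rle_antisym.
      * apply MXg_le. intros i _. unfold Wf. rewrite !(proj2 (H1 _ _) eq_refl). rewrite Rmax_left by lra. lra.
      * eapply Rle_trans; [apply H0| apply D2_ge_D].
  - assert (forall x y, D2 D f fi k M x y <= D2 D f fi k M y x).
    { intros x y. apply MXg_le. intros i Hi. unfold Wf. rewrite (Hs (iterZ f fi (Z.of_nat i) x)), (Hs (iterZ f fi (- Z.of_nat i) x)).
      apply (MXg_ge (Wf D f fi k y x)). auto. }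
    intros x y. apply Rle_antisym; auto.
  - intros x y z. apply MXg_le. intros i Hi.
    pose proof (MXg_ge (Wf D f fi k x y) M i Hi) as Ma. pose proof (MXg_ge (Wf D f fi k y z) M i Hi) as Mb.
    eapply Rle_trans; [|apply Rplus_le_compat; [exact Ma| exact Mb]].
    unfold Wf. unfold Rdiv. rewrite <- Rmult_plus_distr_r. apply Rmult_le_compat_r.
    left; apply Rinv_0_lt_compat; auto.
    set (a := iterZ f fi (Z.of_nat i)). set (b := iterZ f fi (- Z.of_nat i)).
    pose proof (H3 (a x) (a y) (a z)). pose proof (H3 (b x) (b y) (b z)).
    apply Rmax_lub.
    + eapply Rle_trans; [exact H2|]. apply Rplus_le_compat; apply Rmax_l.
    + eapply Rle_trans; [exact H4|]. apply Rplus_le_compat; apply Rmax_r.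
Qed.

Lemma D2_hyp {X} (D : X -> X -> R) f fi k M c0 (H : LyapHyp D f fi k M c0) x y :
  D2 D f fi k M x y < c0 ->
  k * D2 D f fi k M x y <= D2 D f fi k M (f x) (f y) \/ k * D2 D f fi k M x y <= D2 D f fi k M (fi x) (fi y).
Proof.
  intros Hsm.
  pose proof H as H'. destruct H' as ((H0 & H1 & Hs & H3) & Hfi & Hf & HL & HM & Hk & HkM & Hhyp).
  assert (Hkp : forall i, 0 < k ^ i) by (intros; apply pow_lt; lra).
  assert (Ef : forall i z, iterZ f fi (Z.of_nat i) (f z) = iterZ f fi (Z.of_nat (S i)) z).
  { intros i z. change (f z) with (iterZ f fi 1 z). rewrite <- iterZ_add by assumption. f_equal. lia. }
  assert (Efi : forall i z, iterZ f fi (- Z.of_nat i) (fi z) = iterZ f fi (- Z.of_nat (S i)) z).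
  { intros i z. change (fi z) with (iterZ f fi (-1) z). rewrite <- iterZ_add by assumption. f_equal. lia. }
  destruct (MXg_att (Wf D f fi k x y) M) as [i [Hi E]].
  fold (D2 D f fi k M x y) in E. rewrite E.
  destruct i as [|i].
  - rewrite W0 in E |- *.
    assert (Dsm : D x y < c0) by (rewrite <- E; auto).
    assert (HkM' : k * k ^ (M - 1) = 4) by (rewrite <- HkM; replace M with (S (M - 1)) at 2 by lia; reflexivity).
    destruct (Hhyp x y Dsm) as [Hh|Hh]; [left|right].
    + eapply Rle_trans; [|apply (MXg_ge _ M (M - 1)); lia].
      unfold Wf. rewrite !Ef. replace (S (M - 1)) with M by lia.
      eapply Rle_trans; [|apply Rmult_le_compat_r; [left; apply Rinv_0_lt_compat; auto| apply Rmax_l]].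
      assert (Ek : k * D x y = 4 * D x y / k ^ (M - 1)).
      { rewrite <- HkM'. field. apply Rgt_not_eq, Hkp. }
      rewrite Ek. unfold Rdiv. apply Rmult_le_compat_r; [left; apply Rinv_0_lt_compat; auto| exact Hh].
    + eapply Rle_trans; [|apply (MXg_ge _ M (M - 1)); lia].
      unfold Wf. rewrite !Efi. replace (S (M - 1)) with M by lia.
      eapply Rle_trans; [|apply Rmult_le_compat_r; [left; apply Rinv_0_lt_compat; auto| apply Rmax_r]].
      assert (Ek : k * D x y = 4 * D x y / k ^ (M - 1)).
      { rewrite <- HkM'. field. apply Rgt_not_eq, Hkp. }
      rewrite Ek. unfold Rdiv. apply Rmult_le_compat_r; [left; apply Rinv_0_lt_compat; auto| exact Hh].
  - unfold Wf at 1 2.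
    set (a := D (iterZ f fi (Z.of_nat (S i)) x) (iterZ f fi (Z.of_nat (S i)) y)).
    set (b := D (iterZ f fi (- Z.of_nat (S i)) x) (iterZ f fi (- Z.of_nat (S i)) y)).
    assert (Hkk : k * (Rmax a b / k ^ S i) = Rmax a b / k ^ i).
    { simpl. field. repeat split; apply Rgt_not_eq; first [apply Hkp | lra]. }
    rewrite Hkk.
    destruct (Rle_dec b a) as [Hba|Hab]; [left|right].
    + eapply Rle_trans; [|apply (MXg_ge _ M i); lia].
      unfold Wf. rewrite !Ef. fold a. rewrite (Rmax_left a b) by auto.
      apply Rmult_le_compat_r. left; apply Rinv_0_lt_compat; auto. apply Rmax_l.
    + eapply Rle_trans; [|apply (MXg_ge _ M i); lia].
      unfold Wf. rewrite !Efi. fold b. rewrite (Rmax_right a b) by lra.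
      apply Rmult_le_compat_r. left; apply Rinv_0_lt_compat; auto. apply Rmax_r.
Qed.

Lemma rhoOK {X} T (d : X -> X -> R) f fi delta e N (H : RhoHyp T d f fi delta e N) :
  RhoOK (rho d f fi e N).
Proof.
  split; [|split; [|split]].
  - intros; apply rho_nonneg.
  - intros; eapply rho_xx; eauto.
  - intros; eapply rho_sym; eauto.
  - intros; eapply rho_three; eauto.
Qed.

Lemma DD_metric {X} T (d : X -> X -> R) f fi delta e N (H : RhoHyp T d f fi delta e N) :
  is_metric (Dch (rho d f fi e N)).
Proof.
  pose proof (rhoOK T d f fi delta e N H) as Hr. pose proof (proj1 Hr) as H0.
  split; [|split; [|split]].
  - intros; apply D_nonneg; auto.
  - intros x y; split.
    + intros E. apply NNPP; intro Hxy. pose proof (rho_pos T d f fi delta e N H x y Hxy).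
      pose proof (rho_le_2D _ Hr x y). lra.
    + intros ->. apply D_xx; auto.
  - intros; apply D_sym; auto.
  - intros; apply D_tri; auto.
Qed.

Definition kL (M : nat) : R := Rpower 4 (/ INR M).

Lemma kL_props M : (1 <= M)%nat -> 1 < kL M /\ kL M ^ M = 4.
Proof.
  intros HM. assert (HMp : 0 < INR M) by (apply lt_0_INR; lia).
  unfold kL. split.
  - rewrite <- (Rpower_O 4) by lra. apply Rpower_lt. lra. apply Rinv_0_lt_compat; auto.
  - rewrite <- Rpower_pow by (unfold Rpower; apply exp_pos).
    rewrite Rpower_mult. rewrite Rinv_l by lra. apply Rpower_1. lra.
Qed.

Lemma Lyap_ok {X} T (d : X -> X -> R) f fi delta e N (H : RhoHyp T d f fi delta e N) :
  LyapHyp (Dch (rho d f fi e N)) f fi (kL (3 * N)) (3 * N) ((1/2)^4).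
Proof.
  pose proof (rhoOK T d f fi delta e N H) as Hr. pose proof (proj1 Hr) as H0.
  destruct (RH_parts T d f fi delta e N H) as (Hm & H1 & H2 & Hdel & He & HN & HB & _).
  destruct (kL_props (3 * N) ltac:(lia)) as [Hk1 Hk2].
  split; [apply (DD_metric T d f fi delta e N H)|].
  split; [auto|]. split; [auto|].
  split.
  { intros s x y Hs. apply D_map; auto; [|lra]. intros a b. eapply rho_lip; eauto. }
  split; [lia|]. split; [auto|]. split; [auto|].
  intros x y Hxy.
  pose proof (rho_le_2D _ Hr x y) as R1.
  assert (Hsm : rho d f fi e N x y < (1/2)^3) by (simpl in *; lra).
  rewrite Nat2Z.inj_mul. simpl (Z.of_nat 3).
  pose proof (D_le_rho _ H0 x y).
  destruct (rho_hyp T d f fi delta e N H x y Hsm) as [Hh|Hh]; [left|right].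
  - pose proof (rho_le_2D _ Hr (iterZ f fi (3 * Z.of_nat N) x) (iterZ f fi (3 * Z.of_nat N) y)). lra.
  - pose proof (rho_le_2D _ Hr (iterZ f fi (- (3 * Z.of_nat N)) x) (iterZ f fi (- (3 * Z.of_nat N)) y)). lra.
Qed.

Definition dom {X} (A B : X -> X -> R) : Prop :=
  forall x eps, 0 < eps -> exists s, 0 < s /\ forall y, A x y < s -> B x y < eps.

Lemma dom_open {X} (A B : X -> X -> R) U : dom A B -> metric_open B U -> metric_open A U.
Proof.
  intros Hd Ho x Ux. destruct (Ho x Ux) as [r [Hr Hy]]. destruct (Hd x r Hr) as [s [Hs Hs']].
  exists s; split; auto.
Qed.

Lemma dom_trans {X} (A B C : X -> X -> R) : dom A B -> dom B C -> dom A C.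
Proof.
  intros H1 H2 x eps He. destruct (H2 x eps He) as [s [Hs Hs']]. destruct (H1 x s Hs) as [t [Ht Ht']].
  exists t; split; auto.
Qed.

Lemma dom_le {X} (A B : X -> X -> R) C : 0 < C -> (forall x y, B x y <= C * A x y) -> dom A B.
Proof.
  intros HC H x eps He. exists (eps / C). split. apply Rdiv_lt_0_compat; auto.
  intros y Hy. specialize (H x y). apply Rmult_lt_compat_l with (r := C) in Hy; auto.
  replace (C * (eps / C)) with eps in Hy by (field; lra). lra.
Qed.

Lemma dom_DD_d {X} T (d : X -> X -> R) f fi delta e N (H : RhoHyp T d f fi delta e N) :
  dom (Dch (rho d f fi e N)) d.
Proof.
  pose proof (rhoOK T d f fi delta e N H) as Hr.
  destruct (RH_parts T d f fi delta e N H) as (Hm & H1 & H2 & Hdel & He & HN & HB & _).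
  pose proof H as (HS & _).
  intros x eps Heps.
  destruct (UE T d f fi delta HS (eps / 2) ltac:(lra)) as [N' HN'].
  exists ((1/2)^N' / 2). split. pose proof (half_pow_bounds N'). lra.
  intros y Hy. pose proof (rho_le_2D _ Hr x y).
  assert (G : Gk d f fi e N N' x y) by (apply G_small; lra).
  assert (d x y <= eps / 2); [|lra].
  apply HN'. intros j Hj. assert (d (iterZ f fi j x) (iterZ f fi j y) <= e); [|lra].
  apply G. nia.
Qed.

Lemma dom_d_DD {X} T (d : X -> X -> R) f fi delta e N (H : RhoHyp T d f fi delta e N) :
  dom d (Dch (rho d f fi e N)).
Proof.
  pose proof (rhoOK T d f fi delta e N H) as Hr.
  destruct (RH_parts T d f fi delta e N H) as (Hm & H1 & H2 & Hdel & He & HN & HB & _).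
  pose proof H as (HS & _).
  intros x eps Heps.
  destruct (pow_lt_1_zero (1/2) ltac:(rewrite Rabs_pos_eq; lra) eps Heps) as [k Hk].
  specialize (Hk k (le_n k)). rewrite Rabs_pos_eq in Hk by (left; apply half_pow_bounds).
  destruct (cont_fin T d f fi delta HS (k * N) x e ltac:(lra)) as [s [Hs Hs']].
  exists s; split; auto. intros y Hy.
  assert (G : Gk d f fi e N k x y).
  { intros j Hj. left. apply Hs'; auto. rewrite Nat2Z.inj_mul. auto. }
  apply rho_small in G. pose proof (D_le_rho _ (proj1 Hr) x y).
  pose proof (half_pow_anti k (S k) ltac:(lia)). lra.
Qed.

Lemma dW'_bound {X} (D : X -> X -> R) (Hm : is_metric D) f g a x y :
  dW' D f g a -> x <> y -> D (f x) (f y) - a * D x y <= D (g x) (g y).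
Proof.
  intros Hw Hxy. destruct Hm as (H0 & H1 & _).
  assert (Hp : 0 < D x y).
  { destruct (H0 x y); auto. exfalso. apply Hxy. apply H1. auto. }
  assert (Hb : Rabs (D (f x) (f y) - D (g x) (g y)) / D x y <= a).
  { apply (proj1 Hw). right. exists x, y. auto. }
  apply Rmult_le_compat_r with (r := D x y) in Hb; [|lra].
  unfold Rdiv in Hb. rewrite Rmult_assoc, Rinv_l, Rmult_1_r in Hb by lra.
  pose proof (Rle_abs (D (f x) (f y) - D (g x) (g y))). lra.
Qed.

Lemma sup_nonneg_ge0 P r : sup_nonneg P r -> 0 <= r.
Proof. intros H. apply (proj1 H). left; auto. Qed.

Lemma robust {X} (D : X -> X -> R) (f fi g gi : X -> X) k c0 :
  is_metric D -> 1 < k -> 0 < c0 ->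
  (forall x y, D x y < c0 -> k * D x y <= D (f x) (f y) \/ k * D x y <= D (fi x) (fi y)) ->
  bilipschitz_homeo D g gi ->
  (exists r, dW D f fi g gi r /\ r < (k - 1) / 2) ->
  expansive_const D g gi (c0 / 2).
Proof.
  intros Hm Hk Hc0 Hhyp [G1 [G2 _]] [r [[c [a [b [Hc [Ha [Hb Er]]]]]] Hr]].
  assert (Hc0' : 0 <= c).
  { destruct Hc as [a0 [b0 [Ha0 [Hb0 ->]]]]. apply sup_nonneg_ge0 in Ha0. apply sup_nonneg_ge0 in Hb0. lra. }
  pose proof (sup_nonneg_ge0 _ _ Ha). pose proof (sup_nonneg_ge0 _ _ Hb).
  set (k' := (k + 1) / 2).
  assert (Hkey : forall x y, D x y <= c0 / 2 -> k' * D x y <= Rmax (D (g x) (g y)) (D (gi x) (gi y))).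
  { intros x y Hxy. pose proof Hm as (Hm0 & Hm1 & _).
    destruct (classic (x = y)) as [<-|Hne].
    - rewrite (proj2 (Hm1 x x) eq_refl). rewrite Rmult_0_r. eapply Rle_trans; [apply Hm0| apply Rmax_l].
    - pose proof (Hm0 x y).
      destruct (Hhyp x y ltac:(lra)) as [Hh|Hh].
      + pose proof (dW'_bound D Hm f g a x y Ha Hne). eapply Rle_trans; [|apply Rmax_l]. unfold k'. nra.
      + pose proof (dW'_bound D Hm fi gi b x y Hb Hne). eapply Rle_trans; [|apply Rmax_r]. unfold k'. nra. }
  split. lra.
  intros x y Hall. apply NNPP. intro Hne.
  pose proof Hm as (Hq0 & Hq1 & _).
  set (A := fun n => D (iterZ g gi n x) (iterZ g gi n y)).
  assert (Apos : forall n, 0 < A n).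
  { intros n. unfold A. destruct (Hq0 (iterZ g gi n x) (iterZ g gi n y)); auto. exfalso. apply Hne.
    apply (iterZ_inj g gi G1 G2 n). apply Hq1. auto. }
  set (E := fun v => exists n, v = A n).
  assert (Hs : is_lub E (LUB E)).
  { apply LUB_spec. exists (c0 / 2). intros v [n ->]. apply Hall. exists (A 0%Z). exists 0%Z; auto. }
  set (s := LUB E) in *.
  assert (Hs0 : A 0%Z <= s) by (apply (proj1 Hs); exists 0%Z; auto).
  pose proof (Apos 0%Z).
  assert (Hk' : 1 < k') by (unfold k'; lra).
  assert (exists n, s / k' < A n) as [n Hn].
  { apply NNPP; intro Hno. assert (s <= s / k').
    { apply (proj2 Hs). intros v [n ->]. apply Rnot_lt_le. intro Hl. apply Hno. eauto. }
    assert (s / k' < s); [|lra].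
    apply Rmult_lt_reg_r with k'. lra. unfold Rdiv. rewrite Rmult_assoc, Rinv_l by lra. nra. }
  specialize (Hkey (iterZ g gi n x) (iterZ g gi n y) (Hall n)).
  rewrite <- !(iterZ_succ g gi G1 G2), <- !(iterZ_pred g gi G1 G2) in Hkey.
  assert (A (n + 1)%Z <= s) by (apply (proj1 Hs); eexists; eauto).
  assert (A (n - 1)%Z <= s) by (apply (proj1 Hs); eexists; eauto).
  assert (Rmax (A (n + 1)%Z) (A (n - 1)%Z) <= s) by (apply Rmax_lub; auto).
  unfold A in *.
  assert (k' * (s / k') = s) by (field; lra).
  assert (k' * (s / k') < k' * D (iterZ g gi n x) (iterZ g gi n y)) by (apply Rmult_lt_compat_l; lra).
  lra.
Qed.

Theorem mainTheorem2 (X : Type) (T : (X -> Prop) -> Prop)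
  (HTm : metrizable T) (HTc : compact_space T)
  (f fi : X -> X) (Hf : homeomorphism T f fi) (Hexp : expansive T f fi) :
  exists d : X -> X -> R,
    metric_defines T d /\
    bilipschitz_homeo d f fi /\
    exists eps delta : R, 0 < eps /\ 0 < delta /\
      forall g gi : X -> X,
        bilipschitz_homeo d g gi ->
        (exists r, dW d f fi g gi r /\ r < eps) ->
        expansive_const d g gi delta.
Proof.
  destruct Hexp as [d1 [delta [Hd1 Hexpc]]].
  assert (HS : Setup T d1 f fi delta) by (split; [|split; [|split]]; auto).
  pose proof (proj1 Hexpc) as Hdel.
  destruct (UE T d1 f fi delta HS (delta / 3) ltac:(lra)) as [N0 HN0].
  assert (H : RhoHyp T d1 f fi delta (delta / 3) (S N0)).
  { split; [auto|]. split; [auto|]. split; [lia|]. intros u v Hu. apply HN0. intros j Hj. apply Hu. lia. }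
  set (N := S N0) in *.
  set (e := delta / 3) in *.
  pose proof (Lyap_ok T d1 f fi delta e N H) as LH.
  set (DD := Dch (rho d1 f fi e N)) in *.
  set (k := kL (3 * N)) in *.
  set (M := (3 * N)%nat) in *.
  set (D' := D2 DD f fi k M).
  pose proof (D2_metric DD f fi k M _ LH) as HmD'.
  pose proof LH as (HmDD & Hfi & Hff & HL & HM & Hk & HkM & _).
  assert (HLf : forall x y, DD (f x) (f y) <= 2 * DD x y).
  { intros x y. apply (HL 1%Z x y). auto. }
  assert (HLfi : forall x y, DD (fi x) (fi y) <= 2 * DD x y).
  { intros x y. apply (HL (-1)%Z x y). auto. }
  assert (H2M : 0 < 2 ^ M) by (apply pow_lt; lra).
  exists D'. split; [|split].
  - split; auto. intros U. rewrite (proj2 Hd1 U). split.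
    + apply dom_open. eapply dom_trans; [|apply (dom_DD_d T d1 f fi delta e N H)].
      apply (dom_le D' DD 1). lra. intros x y. rewrite Rmult_1_l. apply D2_ge_D.
    + apply dom_open. eapply dom_trans; [apply (dom_d_DD T d1 f fi delta e N H)|].
      apply (dom_le DD D' (2 ^ M)). auto. intros x y. apply (D2_le_D DD f fi k M _ LH).
  - split; [auto|]. split; [auto|]. split.
    + exists (2 ^ M * 2). intros x y.
      eapply Rle_trans; [apply (D2_le_D DD f fi k M _ LH)|].
      pose proof (D2_ge_D DD f fi k M x y). fold D' in H0. pose proof (HLf x y). pose proof (proj1 HmDD (f x) (f y)). nra.
    + exists (2 ^ M * 2). intros x y.
      eapply Rle_trans; [apply (D2_le_D DD f fi k M _ LH)|].
      pose proof (D2_ge_D DD f fi k M x y). fold D' in H0. pose proof (HLfi x y). pose proof (proj1 HmDD (fi x) (fi y)). nra.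
  - exists ((k - 1) / 2), ((1/2)^4 / 2). split; [lra|]. split. pose proof (half_pow_bounds 4). lra.
    intros g gi Hg Hr. apply (robust D' f fi g gi k ((1/2)^4)); auto.
    + apply half_pow_bounds.
    + intros x y Hxy. apply (D2_hyp DD f fi k M _ LH x y Hxy).
Qed.
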